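(* Let $n \geq 3$ and let $(\lambda(1),\dots,\lambda(n))$ be Kerov's growth process. Let $X_n = c(x)$, where $x$ is the box added to $\lambda(n-1)$ to obtain $\lambda(n)$, and let $T_{n-1} = \frac{\sqrt{\binom{n-1}{2}}\,\chi^{\lambda(n-1)}((12))}{\dim(\lambda(n-1))} = \binom{n-1}{2}^{-1/2}\sum_{y\in\lambda(n-1)} c(y)$. Then \begin{enumerate} \item $\mathbb{E}(|X_n|^3) \leq (n-1)\sqrt{2n-3}$; \item $\mathbb{E}(|T_{n-1}|\,|X_n|^3) \leq (n-1)\sqrt{2n-3}$. \end{enumerate}
   Context: For a partition $\mu$, $\dim(\mu)$ is the dimension of the irreducible representation of the symmetric group indexed by $\mu$ and $\chi^\mu$ its character. Kerov's growth process is the Markov chain $(\lambda(1),\dots,\lambda(n))$ where $\lambda(1)$ is the unique partition of $1$ and, given $\lambda(j)$, the partition $\lambda(j+1)$ of $j+1$ is chosen with probability $\frac{\dim(\lambda(j+1))}{(j+1)\dim(\lambda(j))}$ if $\lambda(j+1)$ is obtained from $\lambda(j)$ by adding a single box, and probability $0$ otherwise; each $\lambda(j)$ is then Plancherel distributed on partitions of $j$. The content of a box $x$ is $c(x) = (\text{column number of } x) - (\text{row number of } x)$. *)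

(* Defs.v *)
From mathcomp Require Import all_boot all_order all_algebra.
Unset Printing Implicit Defensive.
Import Order.TTheory GRing.Theory Num.Theory.

(* Partitions are represented as weakly decreasing sequences of positive
   naturals (row lengths, top row first).  Row i (0-indexed) is row number
   i+1; the box in row number r and column number c has content c - r. *)
Definition is_part (s : seq nat) : bool :=
  sorted (fun x y => y <= x) s && all (fun x => 0 < x) s.

Definition adds_box (l m : seq nat) : bool :=
  [&& is_part l, is_part m & has (fun i => m == incr_nth l i) (iota 0 (size l).+1)].

Definition build (w : seq nat) : seq nat := foldl incr_nth [::] w.

Definition lattice_word (w : seq nat) : bool :=
  all (fun k => is_part (build (take k w))) (iota 0 (size w).+1).

(* dim(mu) = number of standard Young tableaux of shape mu, i.e. the number
   of lattice words building mu (= dimension of the irreducible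
   representation of S_|mu| indexed by mu). *)
Definition dim (mu : seq nat) : nat :=
  #|[pred w : (sumn mu).-tuple 'I_(sumn mu) |
      lattice_word (map val w) && (build (map val w) == mu)]|.

Local Open Scope ring_scope.

Definition kerov_trans (R : rcfType) (j : nat) (l m : seq nat) : R :=
  if adds_box l m then (dim m)%:R / ((j.+1 * dim l)%N)%:R else 0.

Definition path_of (w : seq nat) (j : nat) : seq nat := build (take j w).

Definition kerov_path_prob (R : rcfType) (n : nat) (lam : nat -> seq nat) : R :=
  (lam 1%N == [:: 1%N])%:R * \prod_(1 <= j < n) kerov_trans R j (lam j) (lam j.+1).

(* The sample space is enumerated through words w in {0..n-1}^n
   (lambda(j) = shape built by the first j letters); every path in the
   support of the chain arises from exactly one such word, and every other
   word gets probability 0. *)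
Definition kerov_E (R : rcfType) (n : nat) (F : (nat -> seq nat) -> R) : R :=
  \sum_(w : n.-tuple 'I_n)
     kerov_path_prob R n (path_of (map val w)) * F (path_of (map val w)).

Definition added_content (R : rcfType) (l m : seq nat) : R :=
  let i := find (fun i => nth 0%N l i != nth 0%N m i) (iota 0 (size m)) in
  (nth 0%N m i)%:R - (i.+1)%:R.

Definition content_sum (R : rcfType) (l : seq nat) : R :=
  \sum_(i < size l) \sum_(1 <= c < (nth 0%N l i).+1) ((c%:R : R) - (i.+1)%:R).

Definition X_n (R : rcfType) (n : nat) (lam : nat -> seq nat) : R :=
  added_content R (lam n.-1) (lam n).

Definition T_nm1 (R : rcfType) (n : nat) (lam : nat -> seq nat) : R :=
  (Num.sqrt ('C(n.-1, 2))%:R)^-1 * content_sum R (lam n.-1).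

(* Main.v *)
Require Import Defs.
From mathcomp Require Import all_boot all_order all_algebra.
From mathcomp Require Import ring lra zify.
Import Order.TTheory GRing.Theory Num.Theory.

Lemma is_partP s : reflect ((forall i, nth 0 s i.+1 <= nth 0 s i) /\
   (forall i, i < size s -> 0 < nth 0 s i)) (is_part s).
Proof.
rewrite /is_part; apply: (iffP andP) => [[/(sortedP 0) H /(all_nthP 0) H2]|[H1 H2]].
  split=> [i|//]; case: (ltnP i.+1 (size s)) => h; first exact: H h.
  by rewrite (nth_default 0 h).
by split; [apply/(sortedP 0) => i _; exact: H1 | apply/(all_nthP 0)].
Qed.

Lemma part_mono1 s i : is_part s -> nth 0 s i.+1 <= nth 0 s i.
Proof. by case/is_partP=> H _; exact: H. Qed.

Lemma part_size s i : is_part s -> (i < size s) = (0 < nth 0 s i).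
Proof.
case/is_partP=> _ H; case: ltnP => h; first by rewrite H.
by rewrite nth_default.
Qed.

Lemma part_mono s i j : is_part s -> i <= j -> nth 0 s j <= nth 0 s i.
Proof.
move=> ps /subnKC <-; elim: (j - i) => [|k IH]; first by rewrite addn0.
by rewrite addnS; apply: leq_trans (part_mono1 _ (i + k) ps) IH.
Qed.

Lemma part_eq p q : is_part p -> is_part q ->
  (forall i, nth 0 p i = nth 0 q i) -> p = q.
Proof.
move=> pp pq H; apply: (@eq_from_nth _ 0) => [|i _]; last exact: H.
have E i : (i < size p) = (i < size q) by rewrite !part_size // H.
by case: (ltngtP (size p) (size q)) => // h; [move: (E (size p)) | move: (E (size q))];
  rewrite h ltnn.
Qed.

Lemma addP l a : is_part l ->
  is_part (incr_nth l a) = (a == 0) || (nth 0 l a < nth 0 l a.-1).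
Proof.
move=> pl; apply/idP/idP.
  case: a => [//|a] /(part_mono1 _ a); rewrite !nth_incr_nth eqxx (gtn_eqF (ltnSn a)) /=; lia.
move=> h; apply/is_partP; split=> [i|i].
  rewrite !nth_incr_nth; have := part_mono1 _ i pl.
  case: (eqVneq a i.+1) => [ai|]; last by case: (a == i) => /=; lia.
  move: h; rewrite ai /= eqn_leq ltnn /=; lia.
rewrite size_incr_nth nth_incr_nth => hi.
case: (ltnP i (size l)) => his.
  by rewrite addn_gt0 -(part_size _ _ pl) his orbT.
move: hi; case: ifP => ha hi; first lia.
case: (eqVneq a i) => [//|ne] /=.
have h1 : size l <= a.-1 by lia.
have h2 : size l <= a by lia.
move: h; rewrite (nth_default 0 h1) (nth_default 0 h2); lia.
Qed.

Definition remb (l : seq nat) b := nth 0 l b.+1 < nth 0 l b.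
Definition dec (l : seq nat) b :=
  if nth 0 l b == 1 then take b l else set_nth 0 l b (nth 0 l b).-1.

Lemma nth_dec l b i : is_part l -> remb l b ->
  nth 0 (dec l b) i = nth 0 l i - (i == b).
Proof.
rewrite /remb /dec => pl hb; case: eqP => h1.
  case: (ltnP i b) => hib.
    rewrite nth_take //; have -> : (i == b) = false by lia. by rewrite subn0.
  rewrite nth_default; last by rewrite size_take; case: ltnP; lia.
  case: (eqVneq i b) => [->|ne]; first by rewrite h1.
  have : nth 0 l i <= nth 0 l b.+1 by apply: part_mono; lia.
  lia.
rewrite nth_set_nth /=; case: (eqVneq i b) => [->|ne]; lia.
Qed.

Lemma size_dec l b : is_part l -> remb l b -> size (dec l b) <= size l.
Proof.
rewrite /dec => pl hb; case: eqP => _; first by rewrite size_take; case: ltnP; lia.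
rewrite size_set_nth; have : b < size l by rewrite (part_size _ _ pl); move: hb; rewrite /remb; lia.
lia.
Qed.

Lemma is_part_dec l b : is_part l -> remb l b -> is_part (dec l b).
Proof.
move=> pl hb; apply/is_partP; split=> [i|i hi].
  rewrite !nth_dec //; have := part_mono1 _ i pl; move: hb; rewrite /remb.
  have := part_mono _ i b pl; have := part_mono _ b i pl.
  case: (i.+1 =P b) => [<-|e1]; first by rewrite (ltn_eqF (ltnSn i)) /=; lia.
  case: (i =P b) => [<-|e2] /=; lia.
rewrite nth_dec //.
have hbs : b < size l by rewrite (part_size _ _ pl); move: hb; rewrite /remb; lia.
have hil : i < size l by move: hi; have := size_dec _ _ pl hb; lia.
have : 0 < nth 0 l i by rewrite -(part_size _ _ pl).
case: (i =P b) => [e|ne] /=; last lia.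
subst i; move: hi; rewrite /dec; case: eqP => h1; last lia.
by rewrite size_take hbs ltnn.
Qed.

Lemma dec_incr l b : is_part l -> remb l b ->
  is_part (incr_nth (dec l b) b) /\ incr_nth (dec l b) b = l.
Proof.
move=> pl hb; have pd := is_part_dec _ _ pl hb.
have pi : is_part (incr_nth (dec l b) b).
  rewrite addP //; case: b hb {pd} => [//|b] hb /=.
  rewrite !nth_dec // eqxx; have : (b == b.+1) = false by lia.
  move=> ->; have := part_mono1 _ b pl; move: hb; rewrite /remb; lia.
split=> //; apply: part_eq => // i.
rewrite nth_incr_nth nth_dec //; case: (b =P i) => [<-|ne].
  rewrite eqxx; move: hb; rewrite /remb; lia.
rewrite (_ : (i == b) = false) ?subn0 //; by apply/eqP => e; apply: ne.
Qed.

Lemma incr_dec l a : is_part l -> is_part (incr_nth l a) ->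
  remb (incr_nth l a) a /\ dec (incr_nth l a) a = l.
Proof.
move=> pl pa.
have hr : remb (incr_nth l a) a.
  rewrite /remb !nth_incr_nth eqxx; have := part_mono1 _ a pl.
  have -> : (a == a.+1) = false by lia. lia.
split=> //; apply: part_eq => //; first exact: is_part_dec.
move=> i; rewrite nth_dec // nth_incr_nth.
case: (a =P i) => [<-|ne]; first by rewrite eqxx; lia.
rewrite (_ : (i == a) = false) ?subn0 //; by apply/eqP => e; apply: ne.
Qed.

Lemma sumn_incr l a : sumn (incr_nth l a) = (sumn l).+1.
Proof.
elim: l a => [|x l IH] [|a] //=.
  by elim: a => //= a ->.
by rewrite IH addnS.
Qed.

Lemma sumn_dec l b : is_part l -> remb l b -> sumn (dec l b) = (sumn l).-1.
Proof.
move=> pl hb; have [_ e] := dec_incr _ _ pl hb.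
by rewrite -{2}e sumn_incr.
Qed.

Lemma size_le_sumn l : is_part l -> size l <= sumn l.
Proof.
case/andP=> _; elim: l => //= x l IH /andP[hx /IH]; lia.
Qed.

Lemma add_le_size l a : is_part l -> is_part (incr_nth l a) -> a <= size l.
Proof.
move=> pl; rewrite addP //; case: a => //= a.
by rewrite (part_size _ _ pl); lia.
Qed.

Lemma build_rcons s a : build (rcons s a) = incr_nth (build s) a.
Proof. by rewrite /build foldl_rcons. Qed.

Lemma sumn_build s : sumn (build s) = size s.
Proof.
elim/last_ind: s => //= s a IH.
by rewrite build_rcons sumn_incr IH size_rcons.
Qed.

Fixpoint LWs m : seq (seq nat) :=
  if m is m'.+1 then
    flatten [seq [seq rcons s a | a <- iota 0 (size (build s)).+1 &
                   is_part (incr_nth (build s) a)] | s <- LWs m']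
  else [:: [::]].

Lemma LWsS m : LWs m.+1 =
    flatten [seq [seq rcons s a | a <- iota 0 (size (build s)).+1 &
                   is_part (incr_nth (build s) a)] | s <- LWs m].
Proof. by []. Qed.

Lemma LWs_inv m s : s \in LWs m -> is_part (build s) /\ size s = m.
Proof.
elim: m s => [|m IH] s; first by rewrite /= inE => /eqP ->.
rewrite LWsS; case/flatten_mapP=> s' /IH [_ hs'] /mapP [a]; rewrite mem_filter => /andP[pa _] ->.
by rewrite build_rcons size_rcons hs'.
Qed.

Lemma LWs_ext m s a : s \in LWs m -> is_part (incr_nth (build s) a) ->
  rcons s a \in LWs m.+1.
Proof.
move=> hs pa; rewrite LWsS; apply/flatten_mapP; exists s => //.
apply/mapP; exists a => //; rewrite mem_filter pa mem_iota /= add0n ltnS.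
by apply: add_le_size => //; case: (LWs_inv _ _ hs).
Qed.

Definition P m := undup [seq build s | s <- LWs m].

Lemma P_uniq m : uniq (P m).
Proof. exact: undup_uniq. Qed.

Lemma P_mem m l : reflect (exists2 s, s \in LWs m & build s = l) (l \in P m).
Proof.
rewrite mem_undup; apply: (iffP mapP) => [[s hs ->]|[s hs <-]]; by exists s.
Qed.

Lemma P_part m l : l \in P m -> is_part l /\ sumn l = m.
Proof.
case/P_mem=> s /LWs_inv [pl hs] <-; by rewrite sumn_build.
Qed.

Lemma P_ext m l a : l \in P m -> is_part (incr_nth l a) -> incr_nth l a \in P m.+1.
Proof.
case/P_mem=> s hs <- pa; apply/P_mem; exists (rcons s a); first exact: LWs_ext.
by rewrite build_rcons.
Qed.

Lemma P_char' m l : sumn l = m -> is_part l -> l \in P m.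
Proof.
elim: m l => [|m IH] l hl pl.
  have : size l <= 0 by rewrite -hl size_le_sumn.
  by case: l {hl pl} => // _; apply/P_mem; exists [::].
have hs : 0 < size l by case: l hl {pl}.
set b := (size l).-1.
have hb : remb l b.
  rewrite /remb /b prednK // nth_default // -(part_size _ _ pl); lia.
have [pi e] := dec_incr _ _ pl hb.
rewrite -e; apply: P_ext => //; apply: IH; last exact: is_part_dec.
by rewrite sumn_dec // hl.
Qed.

Lemma P_char l : is_part l -> l \in P (sumn l).
Proof. exact: P_char'. Qed.
Section Sums.
Variable R : rcfType.
Local Open Scope ring_scope.

Lemma tup_cons (T : finType) m (F : (m.+1).-tuple T -> R) :
  \sum_(t : (m.+1).-tuple T) F t = \sum_(x : T) \sum_(t : m.-tuple T) F [tuple of x :: t].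
Proof.
rewrite pair_big /=.
rewrite (reindex (fun p : T * m.-tuple T => [tuple of p.1 :: p.2])) //=.
exists (fun t => (thead t, behead_tuple t)) => [[x t] _|t _] /=.
  by congr pair; apply: val_inj.
by case/tupleP: t => x t; apply: val_inj.
Qed.

Fixpoint Wsum (N m : nat) (F : seq nat -> R) : R :=
  if m is m'.+1 then \sum_(x < N) Wsum N m' (fun s => F ((x : nat) :: s)) else F [::].

Lemma Wsum_ext N m F G : (forall s, size s = m -> F s = G s) -> Wsum N m F = Wsum N m G.
Proof.
elim: m F G => [|m IH] F G H /=; first exact: H.
apply: eq_bigr => x _; apply: IH => s hs; apply: H; by rewrite /= hs.
Qed.

Lemma WsumS N m F :
  Wsum N m.+1 F = \sum_(x < N) Wsum N m (fun s => F ((x : nat) :: s)).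
Proof. by []. Qed.

Lemma Wsum_rcons N m F :
  Wsum N m.+1 F = Wsum N m (fun s => \sum_(x < N) F (rcons s x)).
Proof.
elim: m F => [|m IH] F; first by [].
rewrite WsumS [in RHS]WsumS; apply: eq_bigr => x _; by rewrite IH.
Qed.

Lemma tuple_Wsum N m F : \sum_(t : m.-tuple 'I_N) F (map val t) = Wsum N m F.
Proof.
elim: m F => [|m IH] F.
  by rewrite (big_pred1 [tuple]) // => t /=; apply/esym/eqP; apply: tuple0.
rewrite tup_cons /=; apply: eq_bigr => x _; exact: IH.
Qed.

Lemma lattice_rcons s a :
  lattice_word (rcons s a) = lattice_word s && is_part (build (rcons s a)).
Proof.
rewrite /lattice_word size_rcons -addn1 iotaD all_cat add0n all_seq1.
congr andb; last by rewrite take_oversize // size_rcons.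
apply: eq_in_all => k; rewrite mem_iota add0n => /andP[_ hk].
by rewrite -cats1 takel_cat.
Qed.

Lemma bool_mul (b : bool) (x : R) : b%:R * x = if b then x else 0.
Proof. by case: b; rewrite ?mul1r ?mul0r. Qed.

Lemma lattice_LWs N m F : (m <= N)%N ->
  Wsum N m (fun s => (lattice_word s)%:R * F s) = \sum_(s <- LWs m) F s.
Proof.
elim: m F => [|m IH] F hm; first by rewrite /= big_seq1 mul1r.
rewrite Wsum_rcons.
rewrite (@Wsum_ext N m _ (fun s => (lattice_word s)%:R *
   \sum_(x < N) (is_part (incr_nth (build s) x))%:R * F (rcons s x))); last first.
  move=> s _; rewrite mulr_sumr; apply: eq_bigr => x _.
  by rewrite lattice_rcons build_rcons; case: (lattice_word s); case: is_part;
    rewrite ?mul1r ?mul0r.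
rewrite IH ?(ltnW hm) // LWsS big_flatten big_map.
apply: eq_big_seq => s hs; rewrite big_map big_filter.
have [ps ss] := LWs_inv _ _ hs.
have hsz : ((size (build s)).+1 <= N)%N.
  by have := size_le_sumn _ ps; rewrite sumn_build ss; lia.
rewrite -(big_mkord xpredT (fun x => (is_part (incr_nth (build s) x))%:R * F (rcons s x))).
have -> : iota 0 (size (build s)).+1 = index_iota 0 (size (build s)).+1.
  by rewrite /index_iota subn0.
rewrite (big_nat_widen _ _ _ _ _ hsz) big_mkcond /= [RHS]big_mkcond /=.
rewrite /index_iota !subn0; apply: eq_bigr => x _.
rewrite bool_mul; case: ifP => // pa.
by rewrite (leq_ltn_trans (add_le_size _ _ ps pa)).
Qed.
Lemma dimE l : (Defs.dim l)%:R = \sum_(s <- LWs (sumn l)) ((build s == l)%:R : R).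
Proof.
rewrite /Defs.dim -sum1_card natr_sum big_mkcond /=.
transitivity (\sum_(t : (sumn l).-tuple 'I_(sumn l))
   ((lattice_word (map val t))%:R * (build (map val t) == l)%:R : R)).
  apply: eq_bigr => t _; rewrite inE.
  by case: lattice_word; case: eqP; rewrite /= ?mul1r ?mul0r.
by rewrite (tuple_Wsum _ _ (fun s => (lattice_word s)%:R * (build s == l)%:R)) lattice_LWs.
Qed.
Lemma dim1 : (Defs.dim [:: 1%N])%:R = 1 :> R.
Proof. by rewrite dimE /= big_cons big_nil /= addr0. Qed.

Lemma latt_mem s : lattice_word s -> s \in LWs (size s).
Proof.
elim/last_ind: s => [_|s a IH]; first by rewrite inE.
rewrite lattice_rcons build_rcons size_rcons => /andP[/IH hs pa].
exact: LWs_ext.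
Qed.

Lemma sum_ge_term (T : eqType) (r : seq T) x (F : T -> R) :
  x \in r -> (forall y, 0 <= F y) -> F x <= \sum_(y <- r) F y.
Proof.
elim: r => // y r IH; rewrite in_cons big_cons => /orP[/eqP ->|hx] H.
  by rewrite lerDl sumr_ge0.
by rewrite (le_trans (IH hx H)) // lerDr.
Qed.

Lemma sum_pick (T : eqType) (r : seq T) x (G : T -> R) :
  uniq r -> x \in r -> \sum_(y <- r) (x == y)%:R * G y = G x.
Proof.
move=> ur hx; rewrite (bigD1_seq x) //= eqxx mul1r big1 ?addr0 // => y hy.
by rewrite eq_sym (negbTE hy) mul0r.
Qed.

Lemma dim_gt0 s : lattice_word s -> 0 < (Defs.dim (build s))%:R :> R.
Proof.
move=> hl; rewrite dimE sumn_build.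
have := @sum_ge_term _ _ s (fun y => ((build y == build s)%:R : R)) (latt_mem _ hl).
rewrite eqxx; move=> H; apply: lt_le_trans (H _); first exact: ltr01.
by move=> y; case: (build y == build s).
Qed.

Lemma latt_part s : lattice_word s -> is_part (build s).
Proof. by move/latt_mem/LWs_inv => []. Qed.

Lemma adds_boxE l a : is_part l ->
  adds_box l (incr_nth l a) = is_part (incr_nth l a).
Proof.
move=> pl; rewrite /adds_box pl; case pa: (is_part _); last by [].
rewrite andTb; apply/hasP; exists a => //; rewrite mem_iota add0n ltnS.
by rewrite (add_le_size _ _ pl pa).
Qed.

Lemma group_build m (H : seq nat -> R) :
  \sum_(s <- LWs m) H (build s) = \sum_(l <- P m) (Defs.dim l)%:R * H l.
Proof.
transitivity (\sum_(l <- P m) \sum_(s <- LWs m) (build s == l)%:R * H l); last first.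
  apply: eq_big_seq => l hl; have [_ <-] := P_part _ _ hl.
  by rewrite dimE mulr_suml.
rewrite exchange_big /=; apply: eq_big_seq => s hs.
rewrite sum_pick ?P_uniq //; apply/P_mem; by exists s.
Qed.
Lemma is_part0 t : is_part (0%N :: t) = false.
Proof. by rewrite /is_part /= andbF. Qed.

Lemma path_prob_aux s k : (0 < k)%N -> (k <= size s)%N ->
  (build (take 1 s) == [:: 1%N])%:R *
    \prod_(1 <= j < k) kerov_trans R j (build (take j s)) (build (take j.+1 s))
  = (lattice_word (take k s))%:R * (Defs.dim (build (take k s)))%:R / (k`!)%:R.
Proof.
elim: k => [//|k IH] _ hk.
case: k IH hk => [|k] IH hk.
  rewrite big_geq // mulr1 (_ : 1`! = 1)%N // divr1.
  case: s hk {IH} => [//|[|x] s] _; rewrite /= take0.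
    rewrite (_ : build [:: 0%N] = [:: 1%N]) // (_ : lattice_word [:: 0%N] = true) //.
    by rewrite eqxx dim1 mulr1.
  have -> : lattice_word [:: x.+1] = false by rewrite /lattice_word /= /build /= is_part0.
  by rewrite mul0r /build /=.
rewrite big_nat_recr //= mulrA IH // ?(ltnW hk) //.
rewrite (take_nth 0 hk) build_rcons lattice_rcons build_rcons.
case hl: (lattice_word (take k.+1 s)); last by rewrite !mul0r.
have pl := latt_part _ hl; have dpos := dim_gt0 _ hl.
rewrite /kerov_trans adds_boxE //; case: ifP => pa; last by rewrite /= !mulr0 !mul0r.
rewrite /= !mul1r [in RHS]factS natrM [((k.+2 * _)%N)%:R]natrM.
have h1 : (Defs.dim (build (take k.+1 s)))%:R != 0 :> R by rewrite gt_eqF.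
have h2 : (k.+1)`!%:R != 0 :> R by rewrite pnatr_eq0 -lt0n fact_gt0.
have h3 : (k.+2)%:R != 0 :> R by rewrite pnatr_eq0.
move: h1 h2 h3; set d := (Defs.dim _)%:R; set D := (Defs.dim _)%:R.
set f := (_`!)%:R; set c := (k.+2)%:R => h1 h2 h3; clearbody d D f c.
by field; rewrite h1 h2 h3.
Qed.
Lemma kerovE m (Psi : seq nat -> seq nat -> R) :
  kerov_E R m.+1 (fun lam => Psi (lam m) (lam m.+1)) =
  ((m.+1)`!%:R)^-1 * \sum_(l <- P m) (Defs.dim l)%:R *
    \sum_(a <- iota 0 (size l).+1 | is_part (incr_nth l a))
        (Defs.dim (incr_nth l a))%:R * Psi l (incr_nth l a).
Proof.
have -> : kerov_E R m.+1 (fun lam => Psi (lam m) (lam m.+1)) =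
   Wsum m.+1 m.+1 (fun s => kerov_path_prob R m.+1 (path_of s) *
      Psi (path_of s m) (path_of s m.+1)) by rewrite -tuple_Wsum.
rewrite (@Wsum_ext _ _ _ (fun s => (lattice_word s)%:R *
   ((Defs.dim (build s))%:R / ((m.+1)`!)%:R * Psi (build (take m s)) (build s)))); last first.
  move=> s hs; rewrite /kerov_path_prob /path_of path_prob_aux ?hs //.
  by rewrite -hs take_size !mulrA.
rewrite lattice_LWs // LWsS big_flatten big_map.
rewrite mulr_sumr.
set H := (fun l => ((m.+1)`!%:R)^-1 *
   \sum_(a <- iota 0 (size l).+1 | is_part (incr_nth l a))
        (Defs.dim (incr_nth l a))%:R * Psi l (incr_nth l a)).
transitivity (\sum_(s <- LWs m) H (build s)); last first.
  by rewrite group_build; apply: eq_bigr => l _; rewrite /H mulrCA.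
apply: eq_big_seq => s hs; rewrite big_map big_filter /H mulr_sumr.
have [_ ss] := LWs_inv _ _ hs.
apply: eq_bigr => a _; rewrite build_rcons -cats1 take_size_cat //.
by rewrite mulrCA mulrA mulrC.
Qed.
Lemma iota_ord n K (Pr : pred nat) (F : nat -> R) : (n <= K)%N ->
  (forall a, Pr a -> (a < n)%N) ->
  \sum_(a <- iota 0 n | Pr a) F a = \sum_(a < K) (Pr a)%:R * F a.
Proof.
move=> hK hP.
have -> : iota 0 n = index_iota 0 n by rewrite /index_iota subn0.
rewrite (big_nat_widen _ _ _ _ _ hK) big_mkcond /= -(big_mkord xpredT (fun a => (Pr a)%:R * F a)).
apply: eq_bigr => a _; rewrite bool_mul.
by case pa: (Pr a) => //=; rewrite hP.
Qed.

Lemma rem_equiv nu L a : is_part nu -> is_part L ->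
  (is_part (incr_nth nu a) && (incr_nth nu a == L)) = (remb L a && (nu == dec L a)).
Proof.
move=> pn pL; apply/idP/idP.
  case/andP=> pa /eqP <-; have [h1 h2] := incr_dec _ _ pn pa.
  by rewrite h1 h2 eqxx.
case/andP=> hr /eqP ->; have [h1 h2] := dec_incr _ _ pL hr.
by rewrite h1 h2 eqxx.
Qed.

Lemma sizeP m l : l \in P m -> (size l <= m)%N.
Proof. by case/P_part=> pl <-; exact: size_le_sumn. Qed.

Lemma rem_lt l b : is_part l -> remb l b -> (b < size l)%N.
Proof. by move=> pl; rewrite (part_size _ _ pl) /remb; lia. Qed.

Lemma dec_P m l b : l \in P m.+1 -> remb l b -> dec l b \in P m.
Proof.
move=> hl hb; have [pl sl] := P_part _ _ hl.
apply: P_char'; last exact: is_part_dec.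
by rewrite sumn_dec // sl.
Qed.

Lemma bool_mul2 (b1 b2 : bool) (x : R) : b1%:R * (b2%:R * x) = (b1 && b2)%:R * x.
Proof. by case: b1; case: b2; rewrite ?mul1r ?mul0r. Qed.

Lemma REM m L (G : seq nat -> nat -> R) : L \in P m.+1 ->
  \sum_(nu <- P m) \sum_(a <- iota 0 (size nu).+1 | is_part (incr_nth nu a))
     (incr_nth nu a == L)%:R * G nu a
  = \sum_(b <- iota 0 (size L) | remb L b) G (dec L b) b.
Proof.
move=> hL; have [pL sL] := P_part _ _ hL; have szL := sizeP _ _ hL.
rewrite [RHS](iota_ord (size L) m.+2); last 2 first.
- lia.
- by move=> b /(rem_lt _ _ pL).
transitivity (\sum_(nu <- P m) \sum_(a < m.+2)
   (is_part (incr_nth nu a))%:R * ((incr_nth nu a == L)%:R * G nu a)).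
  apply: eq_big_seq => nu hnu; have [pn _] := P_part _ _ hnu.
  apply: iota_ord; first by have := sizeP _ _ hnu; lia.
  by move=> a /(add_le_size _ _ pn).
rewrite exchange_big /=; apply: eq_bigr => a _.
transitivity (\sum_(nu <- P m) (dec L a == nu)%:R * ((remb L a)%:R * G nu a)).
  apply: eq_big_seq => nu hnu; have [pn _] := P_part _ _ hnu.
  by rewrite bool_mul2 (rem_equiv _ _ _ pn pL) andbC -bool_mul2 eq_sym.
case hr: (remb L a); last first.
  by rewrite big1 ?mul0r // => nu _; rewrite mul0r mulr0.
by rewrite sum_pick ?P_uniq ?(dec_P _ _ _ hL hr).
Qed.
Notation dR l := ((Defs.dim l)%:R : R).

Lemma dim_up m L : L \in P m.+1 ->
  dR L = \sum_(nu <- P m) dR nu *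
     \sum_(a <- iota 0 (size nu).+1 | is_part (incr_nth nu a)) ((incr_nth nu a == L)%:R : R).
Proof.
move=> hL; have [_ sL] := P_part _ _ hL; rewrite dimE sL LWsS big_flatten big_map.
set H := fun l => \sum_(a <- iota 0 (size l).+1 | is_part (incr_nth l a)) ((incr_nth l a == L)%:R : R).
transitivity (\sum_(s <- LWs m) H (build s)); last by rewrite group_build.
apply: eq_bigr => s _; rewrite big_map big_filter /H; apply: eq_bigr => a _.
by rewrite build_rcons.
Qed.

Lemma dim_rem m L : L \in P m.+1 ->
  dR L = \sum_(b <- iota 0 (size L) | remb L b) dR (dec L b).
Proof.
move=> hL; rewrite (dim_up _ _ hL) -(REM m L (fun nu a => dR nu)) //.
apply: eq_bigr => nu _; rewrite mulr_sumr; apply: eq_bigr => a _; by rewrite mulrC.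
Qed.

Lemma EX m (H : seq nat -> seq nat -> nat -> R) :
  \sum_(L <- P m.+1) \sum_(b <- iota 0 (size L) | remb L b) H L (dec L b) b =
  \sum_(nu <- P m) \sum_(a <- iota 0 (size nu).+1 | is_part (incr_nth nu a))
     H (incr_nth nu a) nu a.
Proof.
transitivity (\sum_(L <- P m.+1) \sum_(nu <- P m)
   \sum_(a <- iota 0 (size nu).+1 | is_part (incr_nth nu a))
     (incr_nth nu a == L)%:R * H L nu a).
  by apply: eq_big_seq => L hL; rewrite (REM m L (fun nu a => H L nu a)).
rewrite exchange_big /=; apply: eq_big_seq => nu hnu.
rewrite exchange_big /=; apply: eq_bigr => a pa.
by rewrite sum_pick ?P_uniq ?P_ext.
Qed.

Lemma UP m (G : seq nat -> R) :
  \sum_(L <- P m.+1) dR L * G L =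
  \sum_(nu <- P m) dR nu *
     \sum_(a <- iota 0 (size nu).+1 | is_part (incr_nth nu a)) G (incr_nth nu a).
Proof.
transitivity (\sum_(L <- P m.+1) \sum_(b <- iota 0 (size L) | remb L b) dR (dec L b) * G L).
  by apply: eq_big_seq => L hL; rewrite (dim_rem _ _ hL) mulr_suml.
rewrite (EX m (fun L nu b => dR nu * G L)); apply: eq_bigr => nu _.
by rewrite mulr_sumr.
Qed.
Lemma cross l a b : is_part l -> a != b ->
  (is_part (incr_nth l a) && remb (incr_nth l a) b) =
  (remb l b && is_part (incr_nth (dec l b) a)).
Proof.
move=> pl ne; case hb: (remb l b) => /=; last first.
  apply/negbTE/negP => /andP[pa]; rewrite /remb !nth_incr_nth (negbTE ne) /=.
  move: hb; rewrite /remb; case: (a == b.+1) => /=; lia.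
have pd := is_part_dec _ _ pl hb.
rewrite (addP _ _ pl) (addP _ _ pd) /remb !nth_incr_nth (negbTE ne) !nth_dec //.
rewrite (negbTE ne) subn0 /=; move: hb; rewrite /remb => hb.
case: (a =P b.+1) => [->|ne2].
  rewrite /= eqxx /=; apply/idP/idP; lia.
case: a ne ne2 => [|a] ne ne2; first by rewrite /= hb.
have -> : (a.+1.-1 == b) = false by apply/eqP => e; apply: ne2; rewrite -e.
have F0 : nat_of_bool false = 0%N by [].
by rewrite !F0 add0n subn0 hb andbT.
Qed.
Lemma dec_incrC l a b : is_part l -> a != b -> is_part (incr_nth l a) ->
  remb (incr_nth l a) b -> dec (incr_nth l a) b = incr_nth (dec l b) a.
Proof.
move=> pl ne pa hr.
have := cross _ _ _ pl ne; rewrite pa hr /= => /esym/andP[hb pda].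
apply: part_eq => //; first exact: is_part_dec.
move=> i; rewrite nth_dec // !nth_incr_nth nth_dec //.
move: hb; rewrite /remb => hb.
case: (i =P b) => [->|nib]; last by rewrite /= !subn0.
by rewrite (negbTE ne) /= !add0n.
Qed.

Definition cadd (l : seq nat) a : R := (nth 0 l a)%:R - a%:R.

Lemma cadd_dec l a b : is_part l -> remb l b -> a != b -> cadd (dec l b) a = cadd l a.
Proof. by move=> pl hb ne; rewrite /cadd nth_dec // (negbTE ne) subn0. Qed.

Lemma cadd_decb l b : is_part l -> remb l b -> cadd (dec l b) b = cadd l b - 1.
Proof.
move=> pl hb; rewrite /cadd nth_dec // eqxx natrB; last by move: hb; rewrite /remb; lia.
by rewrite addrAC.
Qed.

Definition Ssum (f : R -> R) l :=
  \sum_(a <- iota 0 (size l).+1 | is_part (incr_nth l a)) f (cadd l a) * dR (incr_nth l a).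

Definition Phi (f : R -> R) l :=
  \sum_(a <- iota 0 (size l).+1 | is_part (incr_nth l a)) f (cadd l a)
  - \sum_(b <- iota 0 (size l) | remb l b) f (cadd l b - 1).
Lemma Srec m f (l : seq nat) : l \in P m.+1 ->
  Ssum f l = Phi f l * dR l + \sum_(b <- iota 0 (size l) | remb l b) Ssum f (dec l b).
Proof.
move=> hl; have [pl sl] := P_part _ _ hl.
have [K hK] : exists K, K = (size l).+2 by eexists.
set X := fun a b : nat => (is_part (incr_nth l a) && remb (incr_nth l a) b)%:R *
   (f (cadd l a) * dR (dec (incr_nth l a) b)).
set Y := fun a b : nat => (remb l b && is_part (incr_nth (dec l b) a))%:R *
   (f (cadd (dec l b) a) * dR (incr_nth (dec l b) a)).
have eS : Ssum f l = \sum_(a < K) \sum_(b < K) X a b.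
  rewrite /Ssum (iota_ord _ K); [ | lia | by move=> a /(add_le_size _ _ pl)].
  apply: eq_bigr => a _; case pa: (is_part (incr_nth l a)); last first.
    by rewrite mul0r big1 // => b _; rewrite /X pa mul0r.
  have hi := P_ext _ _ _ hl pa.
  rewrite (dim_rem _ _ hi) mulr_sumr mul1r (iota_ord _ K); last 2 first.
  - by have := add_le_size _ _ pl pa; rewrite size_incr_nth; case: ifP; lia.
  - by move=> b /(rem_lt _ _ pa).
  apply: eq_bigr => b _; rewrite /X pa /=.
  by case: (remb _ b); rewrite ?mul1r ?mul0r ?mulr0.
have eT : \sum_(b <- iota 0 (size l) | remb l b) Ssum f (dec l b) =
          \sum_(a < K) \sum_(b < K) Y a b.
  rewrite (iota_ord _ K); [ | lia | by move=> b /(rem_lt _ _ pl)].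
  rewrite exchange_big /=; apply: eq_bigr => b _.
  case hb: (remb l b); last by rewrite mul0r big1 // => a _; rewrite /Y hb mul0r.
  have pd := is_part_dec _ _ pl hb.
  rewrite mul1r /Ssum (iota_ord _ K); last 2 first.
  - by have := size_dec _ _ pl hb; lia.
  - by move=> a /(add_le_size _ _ pd).
  apply: eq_bigr => a _; rewrite /Y hb /=.
  by case: (is_part _); rewrite ?mul1r ?mul0r.
have eP : Phi f l * dR l = \sum_(a < K) X a a - \sum_(a < K) Y a a.
  rewrite /Phi mulrBl !mulr_suml (iota_ord _ K); [ | lia | by move=> a /(add_le_size _ _ pl)].
  rewrite (iota_ord (size l) K); [ | lia | by move=> b /(rem_lt _ _ pl)].
  congr (_ - _); apply: eq_bigr => a _.
    rewrite /X; case pa: (is_part (incr_nth l a)); last by rewrite !mul0r.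
    have [hr hd] := incr_dec _ _ pl pa.
    by rewrite hr hd /= !mul1r.
  rewrite /Y; case hb: (remb l a); last by rewrite !mul0r.
  have [pi e] := dec_incr _ _ pl hb.
  by rewrite pi e cadd_decb //= !mul1r.
have eXY : forall a b : 'I_K, a != b -> X a b = Y a b.
  move=> a b ne; have ne' : (a : nat) != b by [].
  rewrite /X /Y (cross _ _ _ pl ne').
  case E: (remb l b && is_part (incr_nth (dec l b) a)); last by rewrite !mul0r.
  move/andP: E => [hb pda].
  have := cross _ _ _ pl ne'; rewrite hb pda /= => /andP[pa hr].
  by rewrite (dec_incrC _ _ _ pl ne' pa hr) cadd_dec.
have H : \sum_(a < K) \sum_(b < K) X a b - \sum_(a < K) \sum_(b < K) Y a b =
         \sum_(a < K) X a a - \sum_(a < K) Y a a.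
  rewrite -!sumrB; apply: eq_bigr => a _; rewrite -sumrB (bigD1 a) //= big1 ?addr0 //.
  by move=> b hb; rewrite eXY ?subrr // eq_sym.
by rewrite eS eP eT -H subrK.
Qed.
Lemma iotaE n : iota 0%N n = index_iota 0%N n.
Proof. by rewrite /index_iota subn0. Qed.

Lemma cond_sum (r : seq nat) (Pr : pred nat) (F : nat -> R) :
  \sum_(a <- r | Pr a) F a = \sum_(a <- r) (Pr a)%:R * F a.
Proof. by rewrite big_mkcond; apply: eq_bigr => a _; rewrite bool_mul. Qed.

Definition d2 (f : R -> R) x := (f (x + 1) - f x) - (f x - f (x - 1)).

Definition boxsum (g : R -> R) (l : seq nat) :=
  \sum_(i <- iota 0%N (size l)) \sum_(j <- iota 0%N (nth 0 l i)) g (j%:R - i%:R).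

Lemma boxsum_tel f l :
  f 0 + boxsum (d2 f) l =
  \sum_(0%N <= i < size l) (f (cadd l i) - f (cadd l i - 1)) + f (- (size l)%:R).
Proof.
rewrite /boxsum iotaE.
have E1 : forall i : nat, \sum_(j <- iota 0%N (nth 0 l i)) d2 f (j%:R - i%:R) =
   (f (cadd l i) - f (cadd l i - 1)) - (f (- i%:R) - f (- i%:R - 1)).
  move=> i; rewrite iotaE.
  rewrite (@telescope_sumr_eq _ 0 _ (fun j : nat => f (j%:R - i%:R) - f (j%:R - i%:R - 1))) //.
    by rewrite /cadd sub0r.
  move=> j _; rewrite /d2 -addn1 natrD.
  have -> : j%:R + 1%:R - i%:R - 1 = j%:R - i%:R :> R by rewrite addrAC addrK.
  by rewrite [j%:R + 1 - _]addrAC.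
rewrite (eq_bigr _ (fun i _ => E1 i)) sumrB.
have E2 : \sum_(0%N <= i < size l) (f (- i%:R) - f (- i%:R - 1)) = f 0 - f (- (size l)%:R).
  rewrite (@telescope_sumr_eq _ 0 _ (fun i : nat => - f (- i%:R))) //=; last first.
    move=> i _; rewrite -addn1 natrD opprD.
    by rewrite opprK addrC.
  by rewrite oppr0 opprK addrC.
rewrite E2; ring.
Qed.
Lemma Phi_all f l : is_part l ->
  Phi f l = \sum_(0%N <= i < (size l).+1) f (cadd l i)
            - \sum_(0%N <= i < size l) f (cadd l i - 1).
Proof.
move=> pl; rewrite /Phi !iotaE.
set N := \sum_(0%N <= b < size l) (~~ (nth 0 l b.+1 < nth 0 l b)%N)%:R * f (cadd l b - 1).
have E1 : \sum_(0%N <= a < (size l).+1 | is_part (incr_nth l a)) f (cadd l a) =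
          \sum_(0%N <= i < (size l).+1) f (cadd l i) - N.
  apply/eqP; rewrite eq_sym subr_eq; apply/eqP.
  rewrite [LHS](bigID (fun a => is_part (incr_nth l a))) /=; congr (_ + _).
  rewrite cond_sum big_nat_recl // (addP _ _ pl) /= mul0r add0r /N.
  apply: eq_bigr => b _; rewrite (addP _ _ pl) /=.
  case h: (nth 0 l b.+1 < nth 0 l b)%N; rewrite /= ?mul0r ?mul1r //.
  have e : (nth 0 l b.+1 = nth 0 l b)%N.
    by move/negbT: h; rewrite -leqNgt; have := part_mono1 _ b pl; lia.
  by rewrite /cadd e -addn1 natrD opprD addrA.
have E2 : \sum_(0%N <= b < size l | remb l b) f (cadd l b - 1) =
          \sum_(0%N <= i < size l) f (cadd l i - 1) - N.
  apply/eqP; rewrite eq_sym subr_eq; apply/eqP.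
  rewrite [LHS](bigID (fun b => remb l b)) /=; congr (_ + _).
  by rewrite cond_sum.
rewrite E1 E2; ring.
Qed.

Lemma Phi_box f l : is_part l -> Phi f l = f 0 + boxsum (d2 f) l.
Proof.
move=> pl; rewrite Phi_all // boxsum_tel big_nat_recr //= sumrB.
have -> : cadd l (size l) = - (size l)%:R by rewrite /cadd nth_default // sub0r.
ring.
Qed.
Lemma sumn_iota (l : seq nat) :
  \sum_(i <- iota 0%N (size l)) ((nth 0 l i)%:R : R) = (sumn l)%:R.
Proof.
elim: l => [|x l IH]; first by rewrite big_nil.
rewrite /= big_cons (iotaDl 1 0 (size l)) big_map natrD -IH.
by congr (_ + _); apply: eq_bigr => i _; rewrite add1n.
Qed.

Lemma boxsum_ext g1 g2 l : (forall x, g1 x = g2 x) -> boxsum g1 l = boxsum g2 l.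
Proof. by move=> H; apply: eq_bigr => i _; apply: eq_bigr => j _. Qed.

Lemma boxsum_lin (a b : R) g l :
  boxsum (fun x => a * g x + b) l = a * boxsum g l + b * (sumn l)%:R.
Proof.
rewrite /boxsum -sumn_iota mulr_sumr mulr_sumr -big_split /=.
apply: eq_bigr => i _; rewrite big_split /= -mulr_sumr; congr (_ + _).
by rewrite iotaE sumr_const_nat subn0 mulr_natr.
Qed.

Lemma boxsum_widen g l K : (size l <= K)%N ->
  boxsum g l = \sum_(0%N <= i < K) \sum_(0%N <= j < nth 0 l i) g (j%:R - i%:R).
Proof.
move=> hK; rewrite /boxsum iotaE (big_nat_widen _ _ _ _ _ hK) big_mkcond /=.
apply: eq_bigr => i _; rewrite iotaE; case: ltnP => //= hi.
by rewrite nth_default // big_geq.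
Qed.

Lemma boxsum_incr g l a : (a <= size l)%N ->
  boxsum g (incr_nth l a) = boxsum g l + g (cadd l a).
Proof.
move=> ha.
rewrite (boxsum_widen _ _ (size l).+1); last by rewrite size_incr_nth; case: ifP; lia.
rewrite (boxsum_widen _ _ (size l).+1) //.
rewrite (bigD1_seq a) ?mem_index_iota ?iota_uniq //= 1?ltnS //.
rewrite [in RHS](bigD1_seq a) ?mem_index_iota ?iota_uniq //= 1?ltnS //.
rewrite nth_incr_nth eqxx add1n big_nat_recr //= -!addrA; congr (_ + _).
rewrite addrC; congr (_ + _); apply: eq_bigr => i hi.
by rewrite nth_incr_nth eq_sym (negbTE hi) add0n.
Qed.
Lemma Phi_const l : is_part l -> Phi (fun _ => 1) l = 1.
Proof.
move=> pl; rewrite Phi_box // (@boxsum_ext _ (fun x => 0 * x + 0)); last by move=> x; rewrite /d2; ring.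
by rewrite boxsum_lin; ring.
Qed.

Lemma Phi_id l : is_part l -> Phi id l = 0.
Proof.
move=> pl; rewrite Phi_box // (@boxsum_ext _ (fun x => 0 * x + 0)); last by move=> x; rewrite /d2; ring.
by rewrite boxsum_lin; ring.
Qed.

Lemma Phi_sq l : is_part l -> Phi (fun x => x ^+ 2) l = 2 * (sumn l)%:R.
Proof.
move=> pl; rewrite Phi_box // (@boxsum_ext _ (fun x => 0 * x + 2)); last by move=> x; rewrite /d2; ring.
by rewrite boxsum_lin; ring.
Qed.

Lemma Phi_4 l : is_part l ->
  Phi (fun x => x ^+ 4) l = 12 * boxsum (fun x => x ^+ 2) l + 2 * (sumn l)%:R.
Proof.
move=> pl; rewrite Phi_box // (@boxsum_ext _ (fun x => 12 * x ^+ 2 + 2)); last by move=> x; rewrite /d2; ring.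
by rewrite boxsum_lin; ring.
Qed.

Lemma P0 : P 0 = [:: [::]].
Proof. by []. Qed.

Lemma dim0 : dR [::] = 1.
Proof. by rewrite dimE /= big_seq1. Qed.

Lemma Ssum_nil f : Ssum f [::] = f 0.
Proof.
rewrite /Ssum /= big_cons big_nil /= addr0 dim1 mulr1 /cadd.
by rewrite subr0.
Qed.

Lemma S_step m f c (l : seq nat) : l \in P m.+1 ->
  (forall l', l' \in P m -> Ssum f l' = c * dR l') -> Ssum f l = (Phi f l + c) * dR l.
Proof.
move=> hl IH; rewrite (Srec _ _ _ hl) [RHS]mulrDl; congr (_ + _).
rewrite (dim_rem _ _ hl) mulr_sumr; apply: eq_bigr => b hb.
by rewrite IH // dec_P.
Qed.

Lemma S_closed m : forall l, l \in P m ->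
  [/\ Ssum (fun _ => 1) l = (m.+1)%:R * dR l, Ssum id l = 0 &
      Ssum (fun x => x ^+ 2) l = (m%:R * (m.+1)%:R) * dR l].
Proof.
elim: m => [|m IH] l hl.
  move: hl; rewrite P0 inE => /eqP ->; rewrite !Ssum_nil dim0.
  by split; rewrite // ?expr0n /=; ring.
have [pl sl] := P_part _ _ hl.
split.
- rewrite (S_step _ _ ((m.+1)%:R) _ hl); last by move=> l' /IH [].
  by rewrite Phi_const // -natr1 addrC.
- rewrite (S_step _ _ 0 _ hl); last by move=> l' /IH [_ -> _]; rewrite mul0r.
  by rewrite Phi_id // addr0 mul0r.
- rewrite (S_step _ _ (m%:R * (m.+1)%:R) _ hl); last by move=> l' /IH [_ _ ->].
  rewrite Phi_sq // sl; congr (_ * _); rewrite -!natr1; ring.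
Qed.
Lemma Ssum_1 l : Ssum (fun _ => 1) l =
  \sum_(a <- iota 0 (size l).+1 | is_part (incr_nth l a)) dR (incr_nth l a).
Proof. by apply: eq_bigr => a _; rewrite mul1r. Qed.

Lemma Ssum_mulB (B : R) (g : R -> R) l :
  \sum_(a <- iota 0 (size l).+1 | is_part (incr_nth l a)) dR (incr_nth l a) * (B + g (cadd l a))
  = B * Ssum (fun _ => 1) l + Ssum g l.
Proof.
rewrite Ssum_1 mulr_sumr /Ssum -big_split /=; apply: eq_bigr => a _; ring.
Qed.

Definition Q m := \sum_(l <- P m) dR l * dR l.

Lemma Q_val m : Q m = (m`!)%:R.
Proof.
elim: m => [|m IH]; first by rewrite /Q P0 big_seq1 dim0 mulr1.
rewrite /Q UP -/(Q m).
transitivity (\sum_(nu <- P m) dR nu * Ssum (fun _ => 1) nu).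
  by apply: eq_bigr => nu _; rewrite Ssum_1.
rewrite (eq_big_seq (fun nu => (m.+1)%:R * (dR nu * dR nu))); last first.
  by move=> nu hnu; have [-> _ _] := S_closed _ _ hnu; rewrite mulrCA.
by rewrite -mulr_sumr -/(Q m) IH factS natrM.
Qed.

Definition Y m := \sum_(l <- P m) dR l * (dR l * boxsum (fun x => x ^+ 2) l).

Lemma boxsum_nil g : boxsum g [::] = 0.
Proof. by rewrite /boxsum big_nil. Qed.

Lemma Y_val m : Y m = (m`!)%:R * (m%:R * (m%:R - 1) / 2).
Proof.
elim: m => [|m IH]; first by rewrite /Y P0 big_seq1 boxsum_nil; ring.
rewrite /Y UP.
rewrite (eq_big_seq (fun nu => (m.+1)%:R * (dR nu * (dR nu * boxsum (fun x => x ^+ 2) nu))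
     + (m%:R * (m.+1)%:R) * (dR nu * dR nu))); last first.
  move=> nu hnu; have [pn _] := P_part _ _ hnu.
  rewrite (eq_bigr (fun a => dR (incr_nth nu a) * (boxsum (fun x => x ^+ 2) nu + (cadd nu a) ^+ 2))); last first.
    by move=> a pa; rewrite boxsum_incr // (add_le_size _ _ pn pa).
  rewrite (Ssum_mulB _ (fun x => x ^+ 2)); have [-> _ ->] := S_closed _ _ hnu; ring.
rewrite big_split /= -!mulr_sumr -/(Y m) -/(Q m) IH Q_val factS natrM -!natr1.
have h2 : (2 : R) != 0 by rewrite pnatr_eq0.
by field.
Qed.

Definition W m := \sum_(l <- P m) dR l * (dR l * boxsum id l ^+ 2).

Lemma W_val m : W m = (m`!)%:R * (m%:R * (m%:R - 1) / 2).
Proof.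
elim: m => [|m IH]; first by rewrite /W P0 big_seq1 boxsum_nil; ring.
rewrite /W UP.
rewrite (eq_big_seq (fun nu => (m.+1)%:R * (dR nu * (dR nu * boxsum id nu ^+ 2))
     + (m%:R * (m.+1)%:R) * (dR nu * dR nu))); last first.
  move=> nu hnu; have [pn _] := P_part _ _ hnu.
  rewrite (eq_bigr (fun a => dR (incr_nth nu a) * (boxsum id nu ^+ 2 +
      (2 * boxsum id nu * cadd nu a + (cadd nu a) ^+ 2)))); last first.
    by move=> a pa; rewrite boxsum_incr ?(add_le_size _ _ pn pa) //=; ring.
  rewrite (Ssum_mulB _ (fun x => 2 * boxsum id nu * x + x ^+ 2)).
  have -> : Ssum (fun x => 2 * boxsum id nu * x + x ^+ 2) nu =
            2 * boxsum id nu * Ssum id nu + Ssum (fun x => x ^+ 2) nu.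
    by rewrite /Ssum mulr_sumr -big_split /=; apply: eq_bigr => a _; ring.
  have [-> -> ->] := S_closed _ _ hnu; ring.
rewrite big_split /= -!mulr_sumr -/(W m) -/(Q m) IH Q_val factS natrM -!natr1.
have h2 : (2 : R) != 0 by rewrite pnatr_eq0.
by field.
Qed.

Definition Z m := \sum_(l <- P m) dR l * Ssum (fun x => x ^+ 4) l.

Lemma Z_val m : Z m = (m`!)%:R * (m%:R * (m%:R + 1) * (2 * m%:R - 1)).
Proof.
elim: m => [|m IH]; first by rewrite /Z P0 big_seq1 Ssum_nil; ring.
rewrite /Z.
rewrite (eq_big_seq (fun L => (12 * (dR L * (dR L * boxsum (fun x => x ^+ 2) L))
      + 2 * (m.+1)%:R * (dR L * dR L)) +
      \sum_(b <- iota 0 (size L) | remb L b) dR L * Ssum (fun x => x ^+ 4) (dec L b)));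
  last first.
  move=> L hL; have [pL sL] := P_part _ _ hL.
  rewrite (Srec _ _ _ hL) Phi_4 // sL mulrDr -mulr_sumr; congr (_ + _); ring.
rewrite big_split /= (EX m (fun L nu b => dR L * Ssum (fun x => x ^+ 4) nu)).
rewrite big_split /= -!mulr_sumr -/(Y m.+1) -/(Q m.+1) Y_val Q_val.
rewrite (eq_big_seq (fun nu => (m.+1)%:R * (dR nu * Ssum (fun x => x ^+ 4) nu))); last first.
  move=> nu hnu; rewrite -mulr_suml -Ssum_1; have [-> _ _] := S_closed _ _ hnu; ring.
rewrite -mulr_sumr -/(Z m) IH factS natrM -!natr1.
have h2 : (2 : R) != 0 by rewrite pnatr_eq0.
by field.
Qed.
Lemma added_cadd l a : is_part l -> is_part (incr_nth l a) ->
  added_content R l (incr_nth l a) = cadd l a.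
Proof.
move=> pl pa; rewrite /added_content.
have ha := add_le_size _ _ pl pa.
have hs : (a < size (incr_nth l a))%N by rewrite size_incr_nth; case: ifP; lia.
set p := (fun i => nth _ l i != nth _ (incr_nth l a) i).
have pi : forall i, p i = (i == a).
  move=> i; rewrite /p nth_incr_nth; case: (a =P i) => [->|ne]; first by rewrite eqxx; lia.
  have -> : (i == a) = false by apply/eqP => e; apply: ne.
  by rewrite add0n eqxx.
have -> : find p (iota 0 (size (incr_nth l a))) = a.
  apply/eqP; rewrite eqn_leq; apply/andP; split.
    rewrite leqNgt; apply/negP => /(before_find 0%N).
    by rewrite nth_iota // add0n pi eqxx.
  rewrite leqNgt; apply/negP => hf.
  have hh : has p (iota 0 (size (incr_nth l a))).
    by apply/hasP; exists a; rewrite ?mem_iota ?add0n ?pi ?eqxx.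
  have := nth_find 0%N hh; rewrite nth_iota ?add0n ?pi; last first.
    exact: ltn_trans hf hs.
  by move/eqP => e; move: hf; rewrite e ltnn.
rewrite nth_incr_nth eqxx /= /cadd -!natr1; ring.
Qed.

Lemma content_boxsum l : content_sum R l = boxsum id l.
Proof.
rewrite /content_sum /boxsum iotaE big_mkord; apply: eq_bigr => i _.
rewrite iotaE big_add1; apply: eq_bigr => j _.
by rewrite -!natr1 /=; ring.
Qed.
Lemma kerov_moment m (g : R -> R) (h : seq nat -> R) :
  kerov_E R m.+1 (fun lam => h (lam m) * g (added_content R (lam m) (lam m.+1))) =
  ((m.+1)`!%:R)^-1 * \sum_(l <- P m) dR l * (h l * Ssum g l).
Proof.
have := kerovE m (fun l l' => h l * g (added_content R l l')); rewrite /= => ->.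
congr (_ * _); apply: eq_big_seq => l hl; have [pl _] := P_part _ _ hl.
congr (_ * _); rewrite /Ssum mulr_sumr; apply: eq_bigr => a pa.
by rewrite added_cadd //; ring.
Qed.

Lemma kerov_lin n (a : R) F G :
  kerov_E R n (fun lam => a * F lam + G lam) = a * kerov_E R n F + kerov_E R n G.
Proof.
rewrite /kerov_E mulr_sumr -big_split; apply: eq_bigr => w _ /=.
by rewrite mulrDr mulrCA.
Qed.

Lemma kerov_prob_ge0 n lam : 0 <= kerov_path_prob R n lam.
Proof.
rewrite /kerov_path_prob mulr_ge0 ?ler0n // prodr_ge0 // => j _.
by rewrite /kerov_trans; case: ifP => _ //; rewrite divr_ge0 ?ler0n.
Qed.

Lemma kerov_mono n F G : (forall lam, F lam <= G lam) ->
  kerov_E R n F <= kerov_E R n G.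
Proof.
move=> H; rewrite /kerov_E; apply: ler_sum => w _.
by rewrite ler_wpM2l ?kerov_prob_ge0.
Qed.

Lemma kerov_ext n F G : (forall lam, F lam = G lam) -> kerov_E R n F = kerov_E R n G.
Proof. by move=> H; rewrite /kerov_E; apply: eq_bigr => w _; rewrite H. Qed.

Lemma EX2 m : kerov_E R m.+1 (fun lam => X_n R m.+1 lam ^+ 2) = m%:R.
Proof.
rewrite (@kerov_ext _ _ (fun lam => 1 * added_content R (lam m) (lam m.+1) ^+ 2)); last first.
  by move=> lam; rewrite mul1r.
have := kerov_moment m (fun x => x ^+ 2) (fun _ => 1); rewrite /= => ->.
rewrite (eq_big_seq (fun l => (m%:R * (m.+1)%:R) * (dR l * dR l))); last first.
  by move=> l hl; have [_ _ ->] := S_closed _ _ hl; ring.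
rewrite -mulr_sumr -/(Q m) Q_val factS natrM.
have h1 : (m.+1)%:R != 0 :> R by rewrite pnatr_eq0.
have h2 : (m`!)%:R != 0 :> R by rewrite pnatr_eq0 -lt0n fact_gt0.
move: h1 h2; set a := (m.+1)%:R; set b := (m`!)%:R => h1 h2; clearbody a b.
by field; rewrite h1 h2.
Qed.

Lemma EX4 m : kerov_E R m.+1 (fun lam => X_n R m.+1 lam ^+ 4) = m%:R * (2 * m%:R - 1).
Proof.
rewrite (@kerov_ext _ _ (fun lam => 1 * added_content R (lam m) (lam m.+1) ^+ 4)); last first.
  by move=> lam; rewrite mul1r.
have := kerov_moment m (fun x => x ^+ 4) (fun _ => 1); rewrite /= => ->.
rewrite (eq_bigr (fun l => dR l * Ssum (fun x => x ^+ 4) l)); last by move=> l _; rewrite mul1r.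
rewrite -/(Z m) Z_val factS natrM -natr1.
have h1 : m%:R + 1 != 0 :> R by rewrite natr1 pnatr_eq0.
have h2 : (m`!)%:R != 0 :> R by rewrite pnatr_eq0 -lt0n fact_gt0.
move: h1 h2; set a := m%:R; set b := (m`!)%:R => h1 h2; clearbody a b.
by field; rewrite h1 h2.
Qed.

Lemma C_val m : ('C(m, 2))%:R * 2 = m%:R * (m%:R - 1) :> R.
Proof.
elim: m => [|m IH]; first by rewrite bin0n mul0r mul0r.
rewrite binS bin1 natrD mulrDl IH -natr1; ring.
Qed.

Lemma ETX m : (2 <= m)%N ->
  kerov_E R m.+1 (fun lam => T_nm1 R m.+1 lam ^+ 2 * X_n R m.+1 lam ^+ 2) = m%:R.
Proof.
move=> hm.
have := kerov_moment m (fun x => x ^+ 2)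
  (fun l => ((Num.sqrt ('C(m, 2))%:R)^-1 * content_sum R l) ^+ 2); rewrite /= => E.
rewrite (@kerov_ext _ _ (fun lam => ((Num.sqrt ('C(m, 2))%:R)^-1 * content_sum R (lam m)) ^+ 2 *
   added_content R (lam m) (lam m.+1) ^+ 2)) //.
rewrite E.
set C := ('C(m, 2))%:R : R.
have hC : 0 < C.
  rewrite ltr0n bin_gt0; lia.
have hs : (Num.sqrt C)^-1 ^+ 2 = C^-1 by rewrite exprVn sqr_sqrtr // ltW.
rewrite (eq_big_seq (fun l => (m%:R * (m.+1)%:R / C) * (dR l * (dR l * boxsum id l ^+ 2))));
  last first.
  move=> l hl; have [_ _ ->] := S_closed _ _ hl.
  by rewrite exprMn hs content_boxsum; ring.
rewrite -mulr_sumr -/(W m) W_val.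
have hC2 := C_val m; rewrite -/C in hC2.
have h1 : (m.+1)%:R != 0 :> R by rewrite pnatr_eq0.
have h2 : (m`!)%:R != 0 :> R by rewrite pnatr_eq0 -lt0n fact_gt0.
have h3 : C != 0 by rewrite gt_eqF.
rewrite factS natrM -natr1 in h1 *.
move: h1 h2 h3 hC2; set a := m%:R; set b := (m`!)%:R => h1 h2 h3 hC2; clearbody a b C.
have -> : a * (a - 1) / 2 = C by rewrite -hC2; field.
by field; rewrite h1 h2 h3.
Qed.
Lemma kerov_scale n (a : R) F :
  kerov_E R n (fun lam => a * F lam) = a * kerov_E R n F.
Proof.
rewrite /kerov_E mulr_sumr; apply: eq_bigr => w _ /=.
by rewrite mulrCA.
Qed.

Lemma key_ineq (s u v : R) : 2 * s * (u * v) <= s ^+ 2 * u ^+ 2 + v ^+ 2.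
Proof.
rewrite -subr_ge0.
have -> : s ^+ 2 * u ^+ 2 + v ^+ 2 - 2 * s * (u * v) = (s * u - v) ^+ 2 by ring.
exact: sqr_ge0.
Qed.

End Sums.

Local Open Scope ring_scope.

Theorem lemma4 (R : rcfType) (n : nat) : (3 <= n)%N ->
  kerov_E R n (fun lam => `|X_n R n lam| ^+ 3)
    <= (n.-1)%:R * Num.sqrt (2 * n%:R - 3)
  /\
  kerov_E R n (fun lam => `|T_nm1 R n lam| * `|X_n R n lam| ^+ 3)
    <= (n.-1)%:R * Num.sqrt (2 * n%:R - 3).
Proof.
move=> hn.
have [m em] : exists m, n = m.+1 by exists n.-1; rewrite prednK //; lia.
subst n; have hm : (2 <= m)%N by lia.
rewrite [(m.+1).-1]/=.
set s := Num.sqrt (2 * (m.+1)%:R - 3).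
have hm' : (2 : R) <= m%:R by rewrite (ler_nat R 2 m).
have hpos : 0 <= 2 * (m.+1)%:R - 3 :> R by rewrite -natr1; lra.
have hs2 : s ^+ 2 = 2 * m%:R - 1 by rewrite sqr_sqrtr // -natr1; ring.
have hs0 : 0 < s by rewrite sqrtr_gt0 -natr1; lra.
have h2s : 0 < 2 * s by rewrite mulr_gt0.
split.
- rewrite -(ler_pM2l h2s) -kerov_scale.
  apply: le_trans (@kerov_mono R m.+1 _ (fun lam => s ^+ 2 * X_n R m.+1 lam ^+ 2 +
                                                X_n R m.+1 lam ^+ 4) _) _.
    move=> lam; set x := X_n R m.+1 lam.
    have e2 : `|x| ^+ 2 = x ^+ 2 by rewrite real_normK ?num_real.
    have := key_ineq _ s `|x| (`|x| ^+ 2).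
    have -> : `|x| * `|x| ^+ 2 = `|x| ^+ 3 by rewrite -exprS.
    by rewrite e2 (_ : x ^+ 2 ^+ 2 = x ^+ 4) // -exprM.
  rewrite (kerov_lin _ _ (s ^+ 2) (fun lam => X_n R m.+1 lam ^+ 2)
             (fun lam => X_n R m.+1 lam ^+ 4)) EX2 EX4.
  have -> : s ^+ 2 * m%:R + m%:R * (2 * m%:R - 1) = 2 * s * (m%:R * s).
    have -> : 2 * s * (m%:R * s) = 2 * m%:R * s ^+ 2 by ring.
    by rewrite hs2; ring.
  by [].
- rewrite -(ler_pM2l h2s) -kerov_scale.
  apply: le_trans (@kerov_mono R m.+1 _ (fun lam => s ^+ 2 * (T_nm1 R m.+1 lam ^+ 2 * X_n R m.+1 lam ^+ 2) +
                                                X_n R m.+1 lam ^+ 4) _) _.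
    move=> lam; set x := X_n R m.+1 lam; set t := T_nm1 R m.+1 lam.
    have e2 : `|x| ^+ 2 = x ^+ 2 by rewrite real_normK ?num_real.
    have e3 : `|t| ^+ 2 = t ^+ 2 by rewrite real_normK ?num_real.
    have := key_ineq _ s (`|t| * `|x|) (`|x| ^+ 2).
    have -> : `|t| * `|x| * `|x| ^+ 2 = `|t| * `|x| ^+ 3 by rewrite -mulrA -exprS.
    by rewrite exprMn e2 e3 (_ : x ^+ 2 ^+ 2 = x ^+ 4) // -exprM.
  rewrite (kerov_lin _ _ (s ^+ 2) (fun lam => T_nm1 R m.+1 lam ^+ 2 * X_n R m.+1 lam ^+ 2)
             (fun lam => X_n R m.+1 lam ^+ 4)) ETX // EX4.
  have -> : s ^+ 2 * m%:R + m%:R * (2 * m%:R - 1) = 2 * s * (m%:R * s).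
    have -> : 2 * s * (m%:R * s) = 2 * m%:R * s ^+ 2 by ring.
    by rewrite hs2; ring.
  by [].
Qed.
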